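(* Let $N\ge 1$ be an integer and let $\lambda>0$, $\mu>0$, $\Delta\ge 0$ be real numbers. For each integer $c\in\{1,\dots,N\}$ put $$a(c)=\lambda\Big(\Delta+\frac{c}{N\mu}\Big),\qquad P_b(c)=\frac{a(c)^{c}/c!}{\sum_{j=0}^{c}a(c)^{j}/j!}.$$ Then $P_b(c)$ is decreasing in $c$ on $\{1,\dots,N\}$; in particular its minimum is attained at $c=N$ (i.e. replication factor $m=1$).
   Context: Model: an edge system has $N$ workers split into $c$ groups of $m=N/c$ workers each (the replication factor). Jobs arrive as a Poisson process of rate $\lambda$; each arriving job is replicated to all $m$ workers of a free group and a job finding all groups busy is blocked (sent to the cloud). Each worker's service time is shifted exponential $\mathrm{SExp}(\Delta,\mu)$, i.e. $\Delta+Y$ with $Y$ exponential of rate $\mu$; the job-computing time of a replicated job (minimum of $m$ i.i.d. copies) is $\mathrm{SExp}(\Delta,m\mu)$ with mean $\Delta+\frac{1}{m\mu}=\Delta+\frac{c}{N\mu}$. The system is modeled as an M/G/c/c loss queue, so the job-blocking probability is the Erlang B formula $P_b(c)$ above with offered load $a(c)=\lambda\,\mathbb{E}[T_{\text{job}}]$. *)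

(* Defs.v *)
From mathcomp Require Import all_boot all_order all_algebra.
From mathcomp Require Import reals.
Set Implicit Arguments. Unset Strict Implicit. Unset Printing Implicit Defensive.
Import Order.TTheory GRing.Theory Num.Theory.
Local Open Scope ring_scope.

Definition offered_load (R : realType) (N : nat) (lam mu Delta : R) (c : nat) : R :=
  lam * (Delta + c%:R / (N%:R * mu)).

Definition erlangB (R : realType) (c : nat) (a : R) : R :=
  (a ^+ c / (c`!)%:R) / (\sum_(j < c.+1) a ^+ j / (j`!)%:R).

Definition Pb (R : realType) (N : nat) (lam mu Delta : R) (c : nat) : R :=
  erlangB c (offered_load N lam mu Delta c).

(* Main.v *)
Require Import Defs.
From mathcomp Require Import all_boot all_order all_algebra.
From mathcomp Require Import reals ring lra.
Import Order.TTheory GRing.Theory Num.Theory.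
Local Open Scope ring_scope.

Definition Hd {R : realType} (a : R) (c : nat) : R :=
  (\sum_(j < c.+1) a ^+ j / (j`!)%:R) * (c`!)%:R / a ^+ c.

Lemma Hd0 {R : realType} (a : R) : Hd a 0 = 1.
Proof. by rewrite /Hd big_ord1 /= !expr0 !divr1 mul1r. Qed.

Lemma HdS {R : realType} (a : R) c : a != 0 ->
  Hd a c.+1 = 1 + c.+1%:R / a * Hd a c.
Proof.
move=> a0; rewrite /Hd big_ord_recr /= factS natrM exprS.
have f0 : (c`!)%:R != 0 :> R by rewrite pnatr_eq0 -lt0n fact_gt0.
have c0 : (c.+1)%:R != 0 :> R by rewrite pnatr_eq0.
have ac : a ^+ c != 0 by rewrite expf_neq0.
field; rewrite ?f0 ?c0 ?ac ?a0 //=.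
by rewrite -natr1 addrC in c0.
Qed.

Lemma Hd_gt0 {R : realType} (a : R) c : 0 < a -> 0 < Hd a c.
Proof.
move=> a0; elim: c => [|c IH]; first by rewrite Hd0.
rewrite HdS ?gt_eqF //.
have : 0 <= c.+1%:R / a * Hd a c.
  by apply: mulr_ge0; [apply: divr_ge0; [exact: ler0n|exact: ltW]|exact: ltW].
lra.
Qed.

Lemma Hd_step {R : realType} (a d : R) : 0 < a -> 0 <= d ->
  forall n, n%:R * d <= a -> Hd a n < Hd (a + d) n.+1.
Proof.
move=> a0 d0; elim => [|n IH] hn.
  rewrite Hd0 HdS ?Hd0; last by rewrite gt_eqF //; lra.
  have : 0 < 1%:R / (a + d) by apply: divr_gt0 => //; lra.
  lra.
have hn' : n%:R * d <= a.
  move: hn; rewrite -addn1 natrD; nra.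
have IH' := IH hn'.
have ad : 0 < a + d by lra.
rewrite HdS ?gt_eqF // [Hd (a + d) _.+1]HdS ?gt_eqF //.
have h1 := Hd_gt0 a n a0.
have le1 : n.+1%:R / a <= n.+2%:R / (a + d).
  rewrite ler_pdivrMr // mulrAC ler_pdivlMr //.
  rewrite -[(n.+1)%:R]natr1 -[(n.+2)%:R]natr1 -[(n.+1)%:R]natr1 in hn *; nra.
have p2 : 0 < n.+2%:R / (a + d) by apply: divr_gt0.
have : n.+1%:R / a * Hd a n <= n.+2%:R / (a + d) * Hd a n.
  by apply: ler_wpM2r => //; apply: ltW.
have : n.+2%:R / (a + d) * Hd a n < n.+2%:R / (a + d) * Hd (a + d) n.+1.
  by rewrite ltr_pM2l.
lra.
Qed.

Lemma erlangB_Hd {R : realType} (a : R) c : 0 < a -> erlangB c a = (Hd a c)^-1.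
Proof.
move=> a0; rewrite /erlangB /Hd.
have f0 : (c`!)%:R != 0 :> R by rewrite pnatr_eq0 -lt0n fact_gt0.
have ac : a ^+ c != 0 by rewrite expf_neq0 // gt_eqF.
have s0 : \sum_(j < c.+1) a ^+ j / (j`!)%:R != 0.
  rewrite big_ord_recl /= expr0 divr1 gt_eqF //.
  have : 0 <= \sum_(i < c) a ^+ (bump 0 i) / ((bump 0 i)`!)%:R.
    apply: sumr_ge0 => i _; apply: divr_ge0; [apply: exprn_ge0; lra|exact: ler0n].
  lra.
by field; rewrite ?f0 ?ac ?s0.
Qed.

Lemma Pb_step {R : realType} (N : nat) (lam mu Delta : R) c :
  0 < lam -> 0 < mu -> 0 <= Delta -> (1 <= c)%N -> (c < N)%N ->
  Pb N lam mu Delta c.+1 < Pb N lam mu Delta c.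
Proof.
move=> l0 m0 D0 c1 cN.
have N0 : 0 < N%:R :> R by rewrite ltr0n; apply: leq_ltn_trans cN.
have c0 : 0 < c%:R :> R by rewrite ltr0n.
set d := lam / (N%:R * mu).
have d0 : 0 < d by apply: divr_gt0 => //; apply: mulr_gt0.
have ea : offered_load N lam mu Delta c = lam * Delta + c%:R * d.
  by rewrite /offered_load /d; field; rewrite !gt_eqF.
have eb : offered_load N lam mu Delta c.+1 = offered_load N lam mu Delta c + d.
  rewrite ea /offered_load /d -addn1 natrD; field.
by rewrite (gt_eqF m0) (gt_eqF N0).
have LD : 0 <= lam * Delta by apply: mulr_ge0 => //; apply: ltW.
have a0 : 0 < offered_load N lam mu Delta c.
  rewrite ea; have : 0 < c%:R * d by apply: mulr_gt0.
  lra.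
rewrite /Pb eb !erlangB_Hd //; last by lra.
rewrite ltf_pV2 ?posrE ?Hd_gt0 //; last by lra.
apply: Hd_step => //; first exact: ltW.
rewrite ea; lra.
Qed.

Theorem theorem1 (R : realType) (N : nat) (lam mu Delta : R) :
  (1 <= N)%N -> 0 < lam -> 0 < mu -> 0 <= Delta ->
  (forall c1 c2 : nat, (1 <= c1)%N -> (c1 < c2)%N -> (c2 <= N)%N ->
     Pb N lam mu Delta c2 < Pb N lam mu Delta c1) /\
  (forall c : nat, (1 <= c)%N -> (c <= N)%N ->
     Pb N lam mu Delta N <= Pb N lam mu Delta c).
Proof.
move=> N1 l0 m0 D0.
have A : forall c1 c2 : nat, (1 <= c1)%N -> (c1 < c2)%N -> (c2 <= N)%N ->
     Pb N lam mu Delta c2 < Pb N lam mu Delta c1.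
  move=> c1 c2 h1; elim: c2 => [//|c2 IH] h12 h2N.
  have hs := @Pb_step _ N lam mu Delta c2 l0 m0 D0 (leq_trans h1 (h12 : (c1 <= c2)%N)) h2N.
  case: (ltngtP c1 c2) h12 => [lt _|gt|eq _]; last by rewrite eq.
    exact: lt_trans hs (IH lt (ltnW h2N)).
  by rewrite ltnS leqNgt gt.
split => // c h1 hN.
case: (ltngtP c N) hN => [lt _|//|-> _]; last by [].
  exact: ltW (A _ _ h1 lt (leqnn N)).
Qed.
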